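(* Let $(A_C,\mathcal R_A)$ be an autocatalytic core of a CRN. Then $|A_C|=|\mathcal R_A|$ and its stoichiometric matrix $\overline{\mathbb S}=(\mathbb S)_{A_C}^{\mathcal R_A}$ is a square invertible matrix.
   Context: A chemical reaction network (CRN) consists of a finite species set $\mathcal S$ and a finite set $\mathcal R$ of reactions; each reaction $r$ is written $r^-\to r^+$ with input complex $r^-\in\mathbb Z_{\ge0}^{\mathcal S}$ and output complex $r^+\in\mathbb Z_{\ge0}^{\mathcal S}$. The input and output matrices $\mathbb S^-,\mathbb S^+$ are the $\mathcal S\times\mathcal R$ matrices whose column indexed by $r$ is $r^-$, resp. $r^+$; the stoichiometric matrix is $\mathbb S=\mathbb S^+-\mathbb S^-$. For a matrix $\mathbb A$ with rows indexed by $\mathcal S$ and columns by $\mathcal R$ and subsets $M\subseteq\mathcal S$, $N\subseteq\mathcal R$, $(\mathbb A)_M^N$ is the submatrix with rows in $M$ and columns in $N$. For a vector $\mathbf v$: $\mathbf v\gg\mathbf 0$ means all entries are $>0$; $\mathbf v>\mathbf 0$ (semi-positive) means all entries are $\ge0$ and $\mathbf v\ne\mathbf 0$. A motif is a pair $(\mathcal M,\mathcal R')$ with $\mathcal M\subseteq\mathcal S$, $\mathcal R'\subseteq\mathcal R$. It is exclusively autocatalytic if: (i) there is $\mathbf v\in\mathbb R^{\mathcal R'}$, $\mathbf v\gg\mathbf0$, with $(\mathbb S)_{\mathcal M}^{\mathcal R'}\mathbf v\gg\mathbf 0$; (ii) every row of $(\mathbb S^-)_{\mathcal M}^{\mathcal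 R'}$ is semi-positive; (iii) every column of $(\mathbb S^-)_{\mathcal M}^{\mathcal R'}$ is semi-positive. An autocatalytic core is an exclusively autocatalytic motif $(A_C,\mathcal R_A)$ such that no motif $(\mathcal M',\mathcal R'')\neq(A_C,\mathcal R_A)$ with $\mathcal M'\subseteq A_C$ and $\mathcal R''\subseteq\mathcal R_A$ is exclusively autocatalytic; $A_C$ is called its core set. *)

(* Defs.v *)
From mathcomp Require Import all_boot all_order all_algebra.
Set Implicit Arguments. Unset Strict Implicit. Unset Printing Implicit Defensive.
Import Order.TTheory GRing.Theory Num.Theory.
Local Open Scope ring_scope.

(* A CRN: finite species type S, finite reaction type Rx, input complexes
   Sm s r = (r^-)_s and output complexes Sp s r = (r^+)_s (nonneg integers). *)
Unset Implicit Arguments.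
Record CRN := {
  species : finType;
  reaction : finType;
  Sin : species -> reaction -> nat;
  Sout : species -> reaction -> nat
}.
Set Implicit Arguments.
Arguments Sin {c} s r.
Arguments Sout {c} s r.

Definition stoich (N : CRN) (s : species N) (r : reaction N) : int :=
  (Sout s r)%:Z - (Sin s r)%:Z.

Definition excl_autocatalytic (R : realFieldType) (N : CRN)
    (M : {set species N}) (R' : {set reaction N}) : Prop :=
  M != set0 /\
  (exists v : reaction N -> R,
      (forall r, r \in R' -> 0 < v r) /\
      (forall s, s \in M -> 0 < \sum_(r in R') (stoich s r)%:~R * v r)) /\
  (forall s, s \in M -> exists2 r, r \in R' & (0 < Sin s r)%N) /\
  (forall r, r \in R' -> exists2 s, s \in M & (0 < Sin s r)%N).

Definition autocatalytic_core (R : realFieldType) (N : CRN)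
    (A : {set species N}) (RA : {set reaction N}) : Prop :=
  excl_autocatalytic R A RA /\
  forall (M : {set species N}) (R' : {set reaction N}),
    M \subset A -> R' \subset RA -> (M, R') <> (A, RA) ->
    ~ excl_autocatalytic R M R'.

(* The submatrix (S)_A^{RA} as a #|A| x #|RA| matrix over R, rows and columns
   enumerated via enum_val (any fixed enumeration; invertibility is
   independent of the ordering). *)
Definition stoich_submx (R : realFieldType) (N : CRN)
    (A : {set species N}) (RA : {set reaction N}) : 'M[R]_(#|A|, #|RA|) :=
  \matrix_(i < #|A|, j < #|RA|) (stoich (enum_val i) (enum_val j))%:~R.

(* Main.v *)
Require Import Defs.
From mathcomp Require Import all_boot all_order all_algebra.
Import Order.TTheory GRing.Theory Num.Theory.
Local Open Scope ring_scope.

Section Core.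
Variables (R : realFieldType) (N : CRN) (A : {set species N}) (RA : {set reaction N}).
Hypothesis core : autocatalytic_core R A RA.

Lemma card_le : (#|A| <= #|RA|)%N.
Proof.
case: core => [[An0 [_ [rows cols]]] minl].
case: (set_0Vmem A) => [E|[s0 s0A]]; first by rewrite E in An0; rewrite eqxx in An0.
rewrite leqNgt; apply/negP => lt.
pose f r := odflt s0 [pick s in A | (0 < Sin s r)%N].
pose M := [set f r | r in RA].
have fP r : r \in RA -> f r \in A /\ (0 < Sin (f r) r)%N.
  move=> rRA; rewrite /f; case: pickP => [s /andP[-> ->] //|H].
  by case: (cols r rRA) => s sA sp; move: (H s); rewrite sA sp.
apply: (minl M RA).
- by apply/subsetP => _ /imsetP[y yRA ->]; case: (fP y yRA).
- exact: subxx.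
- case=> EM; move: lt; rewrite -EM; move: (leq_imset_card f (mem RA)).
  by rewrite /M => H1 H2; move: (leq_ltn_trans H1 H2); rewrite ltnn.
- case: (rows s0 s0A) => r rRA _.
  split; first by apply/set0Pn; exists (f r); apply/imsetP; exists r.
  split; first by case: core => [[_ [[v [vp vs]] _]] _]; exists v; split=> // s /imsetP[x xRA ->]; by apply: vs; case: (fP x xRA).
  split.
  + by move=> s /imsetP[x xRA ->]; apply: rows; case: (fP x xRA).
  + by move=> x xRA; exists (f x); [apply/imsetP; exists x | case: (fP x xRA)].
Qed.

Lemma kernel0 (w : reaction N -> R) :
  (forall s, s \in A -> \sum_(r in RA) (stoich s r)%:~R * w r = 0) ->
  forall r, r \in RA -> w r = 0.
Proof.
move=> Hw.
suff H : forall w : reaction N -> R,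
  (forall s, s \in A -> \sum_(r in RA) (stoich s r)%:~R * w r = 0) ->
  forall r, r \in RA -> 0 <= w r.
  move=> r rRA; apply/eqP; rewrite eq_le; apply/andP; split; last exact: H.
  rewrite -oppr_ge0; apply: (H (fun r => - w r)) => // s sA.
  by under eq_bigr do rewrite mulrN; rewrite sumrN Hw // oppr0.
clear w Hw => w Hw r1 r1RA; rewrite leNgt; apply/negP => wneg.
case: core => [[An0 [[v [vp vs]] [rows cols]]] minl].
pose P r := (r \in RA) && (w r < 0).
have Pr1 : P r1 by rewrite /P r1RA wneg.
pose F r := v r / - w r.
case: (arg_minP F Pr1) => r0 /andP[r0RA w0] r0min.
pose t := F r0.
have tpos : 0 < t by rewrite /t /F divr_gt0 ?vp // oppr_gt0.
pose v' r := v r + t * w r.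
have v'ge r : r \in RA -> 0 <= v' r.
  move=> rRA; rewrite /v'; case: (ltP (w r) 0) => wr.
  - have := r0min r; rewrite /P rRA wr => /(_ isT); rewrite /t /F.
    rewrite ler_pdivlMr ?oppr_gt0 // => H.
    by rewrite mulrN -subr_ge0 opprK in H.
  - by apply: addr_ge0; [apply: ltW; apply: vp | apply: mulr_ge0 => //; apply: ltW].
have v'0 : v' r0 = 0.
  by rewrite /v' /t /F invrN mulrN mulNr mulfVK ?subrr //; rewrite lt_eqF.
pose R2 := [set r in RA | 0 < v' r].
pose M2 := [set s in A | [exists r in R2, (0 < Sin s r)%N]].
have sumE s : s \in A -> \sum_(r in R2) (stoich s r)%:~R * v' r = \sum_(r in RA) (stoich s r)%:~R * v r.
  move=> sA.
  have -> : \sum_(r in RA) (stoich s r)%:~R * v r = \sum_(r in RA) (stoich s r)%:~R * v' r.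
    rewrite /v'; under [RHS]eq_bigr do rewrite mulrDr mulrCA; rewrite big_split /=.
    by rewrite -mulr_sumr Hw // mulr0 addr0.
  rewrite [RHS](bigID (mem R2)) /= [X in _ = _ + X]big1 ?addr0.
    by apply: eq_bigl => r; rewrite !inE; case: (r \in RA).
  move=> r /andP[rRA rR2]; move: rR2; rewrite inE rRA /= => /negP nlt.
  suff -> : v' r = 0 by rewrite mulr0.
  by apply/eqP; rewrite eq_le v'ge // andbT leNgt; apply/negP.
apply: (minl M2 R2).
- by apply/subsetP => s; rewrite inE => /andP[].
- by apply/subsetP => r; rewrite inE => /andP[].
- by case=> _ E; move: r0RA; rewrite -E inE v'0 ltxx andbF.
case/set0Pn: An0 => s0 s0A.
have R2n0 : R2 != set0.
  apply/eqP => E; move: (vs s0 s0A); rewrite -sumE // E big_set0 ltxx //.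
case/set0Pn: R2n0 => r2 r2R2.
have r2RA : r2 \in RA by move: r2R2; rewrite inE => /andP[].
split.
  case: (cols r2 r2RA) => s sA sp; apply/set0Pn; exists s.
  by rewrite inE sA /=; apply/existsP; exists r2; rewrite r2R2.
split.
  exists v'; split; first by move=> r; rewrite inE => /andP[].
  by move=> s; rewrite inE => /andP[sA _]; rewrite sumE // vs.
split.
  by move=> s; rewrite inE => /andP[_ /existsP[r /andP[rR2 sp]]]; exists r.
move=> r rR2; have rRA : r \in RA by move: rR2; rewrite inE => /andP[].
case: (cols r rRA) => s sA sp; exists s => //.
by rewrite inE sA /=; apply/existsP; exists r; rewrite rR2.
Qed.

Lemma kerrow k (g : 'I_k -> species N) (u : 'rV[R]_#|RA|) :
  (forall s, s \in A -> exists i, g i = s) ->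
  (forall i, \sum_j u 0 j * (stoich (g i) (enum_val j))%:~R = 0) -> u = 0.
Proof.
move=> surj Hu.
pose w r := \sum_(j < #|RA| | enum_val j == r) u 0 j.
have wE j : w (enum_val j) = u 0 j.
  by rewrite /w (big_pred1 j) // => k'; rewrite /= (inj_eq enum_val_inj).
have K := kernel0 w.
apply/rowP => j; rewrite mxE -wE; apply: K; last exact: enum_valP.
move=> s sA; case: (surj s sA) => i <-; rewrite big_enum_val /=.
by under eq_bigr do rewrite wE mulrC; apply: Hu.
Qed.
End Core.

Theorem mainTheorem5 (R : realFieldType) (N : CRN)
    (A : {set species N}) (RA : {set reaction N}) :
  autocatalytic_core R A RA ->
  exists e : #|A| = #|RA|,
    castmx (e, erefl #|RA|) (stoich_submx R A RA) \in unitmx.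
Proof.
move=> core.
have leA := @card_le _ _ _ _ core.
set B := (stoich_submx R A RA)^T.
have freeT : row_free B.
  rewrite -kermx_eq0; apply/eqP/row_matrixP => i; rewrite row0.
  apply: (@kerrow _ _ _ _ core _ enum_val).
    by move=> s sA; exists (enum_rank_in sA s); rewrite enum_rankK_in.
  move=> i0.
  have H : row i (kermx B) *m B = 0 by rewrite -row_mul mulmx_ker row0.
  move/rowP/(_ i0): H; rewrite [in RHS]mxE [in LHS]mxE => H0; apply: etrans H0.
  by apply: eq_bigr => j _; rewrite /B !mxE.
have leB : (#|RA| <= #|A|)%N.
  by rewrite -row_leq_rank in freeT; exact: leq_trans freeT (rank_leq_col _).
have e : #|A| = #|RA| by apply/eqP; rewrite eqn_leq leA leB.
exists e.
rewrite -unitmx_tr unitmxE unitfE; apply/negP => /det0P [u un0 Hu].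
move/negP: un0; apply; apply/eqP.
apply: (@kerrow _ _ _ _ core _ (fun i => enum_val (cast_ord (esym e) i))).
  by move=> s sA; exists (cast_ord e (enum_rank_in sA s)); rewrite cast_ordK enum_rankK_in.
move=> i0.
move/rowP/(_ i0): Hu; rewrite [in RHS]mxE [in LHS]mxE => H0; apply: etrans H0.
by apply: eq_bigr => j _; rewrite !mxE castmxE /= !mxE cast_ord_id.
Qed.
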